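(* Let $\Gamma$ be the integer Heisenberg group, elements written $(a,b,c)$. Let $\{q_1,q_2,\dots\}$ be an infinite set of distinct primes, and for $\ell\ge1$ put $M_\ell=q_1q_2\cdots q_\ell$ and $N_\ell=q_1^2q_2^2\cdots q_\ell^2$, and $\Gamma_\ell=\{(aM_\ell,bN_\ell,cN_\ell):a,b,c\in\mathbb{Z}\}$. Then $\Gamma_\ell$ is a descending chain of finite-index subgroups, and the associated Cantor action $(X_\infty,\Gamma,\Phi)$, where $X_\infty=\varprojlim\Gamma/\Gamma_\ell$ with $\Gamma$ acting by left translation on each coset space, is topologically free and wild, and its prime spectrum is $\{q_1,q_2,\dots\}$ (each $q_i$ with finite multiplicity).
   Context: The integer Heisenberg group consists of the matrices $\begin{pmatrix}1&a&c\\0&1&b\\0&0&1\end{pmatrix}$, $a,b,c\in\mathbb{Z}$, denoted $(a,b,c)$, with product $(a,b,c)(a',b',c')=(a+a',b+b',c+c'+ab')$. For a descending chain of finite-index subgroups $\Gamma_\ell$, $X_\infty=\varprojlim\{\Gamma/\Gamma_{\ell+1}\to\Gamma/\Gamma_\ell\}$ is a Cantor space (Tychonoff topology) on which $\Gamma$ acts minimally and equicontinuously. The Steinitz order of this action is the supernatural number $\mathrm{lcm}\{[\Gamma:\Gamma_\ell]\}=\prod_p p^{\chi(p)}$, and its prime spectrum is $\{p:\chi(p)>0\}$. Topologically free: no nontrivial $\Phi(g)$ restricts to the identity on a nonempty open set. Locally quasi-analytic: there is $\varepsilon>0$ such that for every nonempty open $U$ of diameter $<\varepsilon$, nonempty open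 $V\subset U$ and group elements $g_1,g_2$, agreement of $g_1,g_2$ on $V$ implies agreement on $U$. With $\mathfrak{G}(\Phi)$ the closure of $\Phi(\Gamma)$ in $\mathrm{Homeo}(X_\infty)$ (uniform topology), the action is wild if the action of $\mathfrak{G}(\Phi)$ on $X_\infty$ is not locally quasi-analytic. *)

(* Defs.v *)
From HB Require Import structures.
From mathcomp Require Import all_boot all_order all_algebra.
From mathcomp Require Import all_classical all_reals.
From mathcomp Require Import Rstruct.
Set Implicit Arguments. Unset Strict Implicit. Unset Printing Implicit Defensive.
Import Order.TTheory GRing.Theory Num.Theory.
Local Open Scope classical_set_scope.
Local Open Scope ring_scope.

Definition Heis := (int * int * int)%type.

Definition hmul (x y : Heis) : Heis :=
  let '(a, b, c) := x in let '(a', b', c') := y in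
  (a + a', b + b', c + c' + a * b').
Definition hone : Heis := (0, 0, 0).
Definition hinv (x : Heis) : Heis :=
  let '(a, b, c) := x in (- a, - b, - c + a * b).

Definition is_subgroup (H : set Heis) : Prop :=
  H hone /\ (forall x y, H x -> H y -> H (hmul x y)) /\
  (forall x, H x -> H (hinv x)).

Definition same_lcoset (H : set Heis) (g h : Heis) : Prop := H (hmul (hinv g) h).

Definition has_index (H : set Heis) (n : nat) : Prop :=
  exists r : 'I_n -> Heis,
    (forall i j, same_lcoset H (r i) (r j) -> i = j) /\
    (forall h, exists i, same_lcoset H (r i) h).

Definition finite_index (H : set Heis) : Prop := exists n, has_index H n.

Definition lcoset (H : set Heis) (g : Heis) : set Heis := [set hmul g h | h in H].

(* q is indexed from 0: M_l = q_0 ... q_{l-1}, N_l = q_0^2 ... q_{l-1}^2 *)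
Definition Mq (q : nat -> nat) (l : nat) : int := (\prod_(i < l) q i)%N%:Z.
Definition Nq (q : nat -> nat) (l : nat) : int := (\prod_(i < l) (q i ^ 2))%N%:Z.

Definition Gamma (q : nat -> nat) (l : nat) : set Heis :=
  [set x | exists a b c : int, x = (a * Mq q l, b * Nq q l, c * Nq q l)].

(* A point is a compatible sequence of left cosets x_l in Gamma/Gamma_l. *)
Definition Pt := (nat -> set Heis)%type.

Definition Xinf (Gam : nat -> set Heis) : set Pt :=
  [set x | forall l, (exists g, x l = lcoset (Gam l) g) /\ x l.+1 `<=` x l].

Definition act (g : Heis) (x : Pt) : Pt := fun l => [set hmul g h | h in x l].

(* Tychonoff topology (discrete factors), restricted to X : basic open sets
   are the cylinders {y | y_l = x_l for l < n}. *)
Definition agree (n : nat) (x y : Pt) : Prop := forall l, (l < n)%N -> x l = y l.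

Definition is_open (X : set Pt) (U : set Pt) : Prop :=
  U `<=` X /\ forall x, U x -> exists n, forall y, X y -> agree n x y -> U y.

Definition continuous_on (X : set Pt) (f : Pt -> Pt) : Prop :=
  forall U, is_open X U -> is_open X [set x | X x /\ U (f x)].

Definition is_homeo (X : set Pt) (f : Pt -> Pt) : Prop :=
  (forall x, X x -> X (f x)) /\
  exists f' : Pt -> Pt, (forall x, X x -> X (f' x)) /\
    (forall x, X x -> f' (f x) = x) /\ (forall x, X x -> f (f' x) = x) /\
    continuous_on X f /\ continuous_on X f'.

(* The standard ultrametric compatible with the topology:
   d(x,y) = 2^{-min{l | x_l <> y_l}}, d(x,x) = 0. *)
Definition dist (x y : Pt) : Rdefinitions.R :=
  sup [set ((2 : Rdefinitions.R) ^+ n)^-1 | n in [set n | x n <> y n]].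

Definition diam (U : set Pt) : Rdefinitions.R := sup [set dist x y | x in U & y in U].

(* Closure of Phi(Gamma) in Homeo(X) for the uniform (sup) metric *)
Definition closure_group (X : set Pt) : set (Pt -> Pt) :=
  [set h | is_homeo X h /\
     forall e : Rdefinitions.R, 0 < e -> exists g : Heis,
       sup [set dist (h x) (act g x) | x in X] < e].

Definition locally_quasi_analytic (X : set Pt) (G : set (Pt -> Pt)) : Prop :=
  exists e : Rdefinitions.R, 0 < e /\
    forall U V : set Pt, is_open X U -> U !=set0 -> diam U < e ->
      is_open X V -> V !=set0 -> V `<=` U ->
      forall g1 g2, G g1 -> G g2 ->
        (forall x, V x -> g1 x = g2 x) -> forall x, U x -> g1 x = g2 x.

Definition wild (X : set Pt) : Prop := ~ locally_quasi_analytic X (closure_group X).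

Definition topologically_free (X : set Pt) : Prop :=
  forall g : Heis, (exists x, X x /\ act g x <> x) ->
    ~ (exists U, is_open X U /\ U !=set0 /\ forall x, U x -> act g x = x).

(* Steinitz order lcm_l [Gamma : Gamma_l] = prod_p p^chi(p) *)
Definition in_prime_spectrum (Gam : nat -> set Heis) (p : nat) : Prop :=
  exists l n, has_index (Gam l) n /\ (0 < logn p n)%N.
Definition finite_multiplicity (Gam : nat -> set Heis) (p : nat) : Prop :=
  exists B, forall l n, has_index (Gam l) n -> (logn p n <= B)%N.

(* Main.v *)
Require Import Defs.
From HB Require Import structures.
From mathcomp Require Import all_boot all_order all_algebra.
From mathcomp Require Import all_classical all_reals.
From mathcomp Require Import Rstruct.
From mathcomp Require Import ring zify.
From mathcomp Require cyclic.
Set Implicit Arguments. Unset Strict Implicit. Unset Printing Implicit Defensive.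
Import Order.TTheory GRing.Theory Num.Theory.
Local Open Scope classical_set_scope.

Section Grp.
Local Open Scope ring_scope.
Lemma hmulA x y z : hmul (hmul x y) z = hmul x (hmul y z).
Proof. case: x => [[a b] c]; case: y => [[a' b'] c']; case: z => [[a'' b''] c''].
rewrite /hmul /=; congr (_,_,_); ring. Qed.
Lemma hmul1 x : hmul hone x = x.
Proof. case: x => [[a b] c]; rewrite /hmul /hone /=; congr (_,_,_); ring. Qed.
Lemma hmulx1 x : hmul x hone = x.
Proof. case: x => [[a b] c]; rewrite /hmul /hone /=; congr (_,_,_); ring. Qed.
Lemma hmulV x : hmul (hinv x) x = hone.
Proof. case: x => [[a b] c]; rewrite /hmul /hinv /hone /=; congr (_,_,_); ring. Qed.
Lemma hmulxV x : hmul x (hinv x) = hone.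
Proof. case: x => [[a b] c]; rewrite /hmul /hinv /hone /=; congr (_,_,_); ring. Qed.
Lemma hinvM x y : hinv (hmul x y) = hmul (hinv y) (hinv x).
Proof. case: x => [[a b] c]; case: y => [[a' b'] c'].
rewrite /hmul /hinv /=; congr (_,_,_); ring. Qed.
Lemma hinvK x : hinv (hinv x) = x.
Proof. case: x => [[a b] c]; rewrite /hinv /=; congr (_,_,_); ring. Qed.
End Grp.
Section Cosets.
Variable H : set Heis.
Hypothesis sH : is_subgroup H.

Lemma lcoset_self g : lcoset H g g.
Proof. case: sH => h1 _; exists hone => //; exact: hmulx1. Qed.

Lemma lcoset_eq g g' : H (hmul (hinv g) g') -> lcoset H g = lcoset H g'.
Proof.
case: sH => h1 [hM hV] Hd; apply/seteqP; split => x [h Hh <-].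
- exists (hmul (hinv (hmul (hinv g) g')) h); first by apply: hM => //; exact: hV.
  by rewrite hinvM hinvK -!hmulA hmulxV hmul1.
- exists (hmul (hmul (hinv g) g') h); first by apply: hM.
  by rewrite -!hmulA hmulxV hmul1.
Qed.

Lemma lcoset_eq_inv g g' : lcoset H g = lcoset H g' -> H (hmul (hinv g) g').
Proof.
move=> E; have := lcoset_self g'; rewrite -E => -[h Hh <-].
by rewrite -hmulA hmulV hmul1.
Qed.

Lemma lcoset_in g k : lcoset H g k -> lcoset H g = lcoset H k.
Proof. by case=> h Hh <-; apply: lcoset_eq; rewrite -hmulA hmulV hmul1. Qed.

Lemma lcoset1 : lcoset H hone = H.
Proof. apply/seteqP; split => x. by case=> h Hh <-; rewrite hmul1.
by move=> Hx; exists x => //; rewrite hmul1. Qed.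
End Cosets.

Lemma act_lcoset H a k : [set hmul a h | h in lcoset H k] = lcoset H (hmul a k).
Proof.
apply/seteqP; split => x.
- by case=> _ [h Hh <-] <-; exists h => //; rewrite hmulA.
- by case=> h Hh <-; exists (hmul k h); [exists h|rewrite hmulA].
Qed.

Lemma lcoset_sub H H' g : H `<=` H' -> lcoset H g `<=` lcoset H' g.
Proof. by move=> s x [h Hh <-]; exists h => //; exact: s. Qed.
Section Arith.
Variable q : nat -> nat.
Hypothesis q_prime : forall i, prime (q i).
Hypothesis q_inj : injective q.
Local Open Scope ring_scope.

Definition Mn l := (\prod_(i < l) q i)%N.
Lemma MnS l : Mn l.+1 = (Mn l * q l)%N.
Proof. by rewrite /Mn big_ord_recr. Qed.
Lemma Mn_gt0 l : (0 < Mn l)%N.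
Proof. elim: l => [|l IH]; first by rewrite /Mn big_ord0.
by rewrite MnS muln_gt0 IH prime_gt0. Qed.
Lemma Mn_ge l : (2 ^ l <= Mn l)%N.
Proof. elim: l => [|l IH]; first by rewrite /Mn big_ord0.
by rewrite MnS expnSr leq_mul // prime_gt1. Qed.

Lemma NqE l : Nq q l = Mq q l * Mq q l.
Proof.
rewrite /Nq /Mq -PoszM; congr Posz; rewrite -big_split /=.
by apply: eq_bigr => i _; rewrite mulnn.
Qed.

Lemma GammaP l a b c : Gamma q l (a, b, c) <->
  [/\ (Mq q l %| a)%Z, (Nq q l %| b)%Z & (Nq q l %| c)%Z].
Proof.
split.
- by case=> a' [b' [c' [-> -> ->]]]; split; apply: dvdz_mull; exact: dvdzz.
- case=> /dvdzP[a' ->] /dvdzP[b' ->] /dvdzP[c' ->]; by exists a', b', c'.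
Qed.

Lemma MqNq l : (Mq q l %| Nq q l)%Z.
Proof. by rewrite NqE; apply: dvdz_mulr; exact: dvdzz. Qed.

Lemma Gamma_subgroup l : is_subgroup (Gamma q l).
Proof.
split; first by apply/GammaP; rewrite !dvdz0.
split.
- move=> [[a b] c] [[a' b'] c'] /GammaP[ha hb hc] /GammaP[ha' hb' hc'].
  apply/GammaP; split; rewrite ?rpredD //.
  by apply: dvdz_mull.
- move=> [[a b] c] /GammaP[ha hb hc]; apply/GammaP; split; rewrite ?rpredN //.
  by rewrite rpredD ?rpredN //; apply: dvdz_mull.
Qed.

Lemma Mq_dvdS l : (Mq q l %| Mq q l.+1)%Z.
Proof. by rewrite /Mq -/(Mn l) -/(Mn l.+1) MnS dvdzE /= dvdn_mulr. Qed.

Lemma Gamma_chain l : Gamma q l.+1 `<=` Gamma q l.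
Proof.
move=> [[a b] c] /GammaP[ha hb hc]; apply/GammaP.
have hN : (Nq q l %| Nq q l.+1)%Z by rewrite !NqE; apply: dvdz_mul; exact: Mq_dvdS.
split; [exact: dvdz_trans (Mq_dvdS l) ha|exact: dvdz_trans hN hb|exact: dvdz_trans hN hc].
Qed.

Lemma Gamma_mono l l' : (l <= l')%N -> Gamma q l' `<=` Gamma q l.
Proof.
move=> /subnKC <-; elim: (l' - l)%N => [|k IH]; first by rewrite addn0.
by rewrite addnS; apply: subset_trans IH; exact: Gamma_chain.
Qed.

Lemma Mq_abs_dvd l (a : int) : (Mq q l %| a)%Z -> a != 0 -> (2 ^ l <= `|a|)%N.
Proof.
move=> h a0; apply: leq_trans (Mn_ge l) _; apply: dvdn_leq.
  by rewrite absz_gt0.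
by move: h; rewrite dvdzE.
Qed.

Lemma Gamma_cap x : (forall l, Gamma q l x) -> x = hone.
Proof.
case: x => [[a b] c] H.
have key (z : int) : (forall l, (Mq q l %| z)%Z) -> z = 0.
  move=> hz; apply/eqP; apply/negPn/negP => z0.
  have := Mq_abs_dvd (hz `|z|%N) z0.
  by rewrite leqNgt ltn_expl.
have [ha hb hc] : [/\ forall l, (Mq q l %| a)%Z, forall l, (Mq q l %| b)%Z
   & forall l, (Mq q l %| c)%Z].
  split=> l; have /GammaP[h1 h2 h3] := H l => //; exact: dvdz_trans (MqNq l) _.
by rewrite /hone (key _ ha) (key _ hb) (key _ hc).
Qed.
End Arith.
Section Index.
Variable q : nat -> nat.
Hypothesis q_prime : forall i, prime (q i).
Local Open Scope ring_scope.

Lemma coset_cond l a b c a' b' c' :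
  Gamma q l (hmul (hinv (a, b, c)) (a', b', c')) <->
  [/\ (Mq q l %| a' - a)%Z, (Nq q l %| b' - b)%Z & (Nq q l %| c' - c)%Z].
Proof.
rewrite /hmul /hinv /=.
have E : - c + a * b + c' + - a * b' = (c' - c) - a * (b' - b) by ring.
rewrite E GammaP; split=> -[h1 h2 h3].
- have h2' : (Nq q l %| b' - b)%Z by rewrite addrC.
  split; first by rewrite addrC.
  + exact: h2'.
  + have : (Nq q l %| c' - c - a * (b' - b) + a * (b' - b))%Z.
      by rewrite rpredD //; apply: dvdz_mull.
    by rewrite subrK.
- split; first by rewrite addrC.
  + by rewrite addrC.
  + by rewrite rpredB //; apply: dvdz_mull.
Qed.

Lemma small_eq (u v d : nat) : (u < d)%N -> (v < d)%N ->
  (d%:Z %| v%:Z - u%:Z)%Z -> u = v.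
Proof.
move=> hu hv; rewrite dvdzE /= => h.
have : `|v%:Z - u%:Z|%N == 0%N.
  apply/negPn/negP => nz; have := dvdn_leq _ h; rewrite lt0n nz => /(_ isT).
  lia.
lia.
Qed.

Lemma Mn_pos l : (0 < Mn q l)%N.
Proof. exact: Mn_gt0. Qed.

Definition idx l := (Mn q l * (Mn q l * Mn q l) * (Mn q l * Mn q l))%N.

Lemma Gamma_index l : has_index (Gamma q l) (idx l).
Proof.
set m := Mn q l; set nn := (m * m)%N.
have m0 : (0 < m)%N by exact: Mn_pos.
have nn0 : (0 < nn)%N by rewrite muln_gt0 m0.
have MqE : Mq q l = m%:Z by [].
have NqE' : Nq q l = nn%:Z by rewrite NqE MqE.
exists (fun i => (((i %% m)%N)%:Z, (((i %/ m) %% nn)%N)%:Z, (((i %/ m) %/ nn)%N)%:Z)).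
split.
- move=> i j /coset_cond[h1 h2 h3]; rewrite MqE NqE' in h1 h2 h3.
  have e1 := small_eq (ltn_pmod _ m0) (ltn_pmod _ m0) h1.
  have e2 := small_eq (ltn_pmod _ nn0) (ltn_pmod _ nn0) h2.
  have bd (k : 'I_(idx l)) : (k %/ m %/ nn < nn)%N.
    rewrite ltn_divLR // ltn_divLR //; apply: leq_trans (ltn_ord k) _.
    rewrite /idx -/m -/nn; lia.
  have e3 := small_eq (bd i) (bd j) h3.
  apply: val_inj => /=.
  rewrite (divn_eq i m) (divn_eq j m) e1; congr (_ * _ + _)%N.
  by rewrite (divn_eq (i %/ m) nn) (divn_eq (j %/ m) nn) e2 e3.
- move=> [[a b] c].
  have mz : m%:Z != 0 by apply/negP => /eqP; lia.
  have nz : nn%:Z != 0 by apply/negP => /eqP; lia.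
  set a0 := `|(a %% m%:Z)%Z|%N; set b0 := `|(b %% nn%:Z)%Z|%N;
  set c0 := `|(c %% nn%:Z)%Z|%N.
  have Ea : a0%:Z = (a %% m%:Z)%Z by rewrite gez0_abs // modz_ge0.
  have Eb : b0%:Z = (b %% nn%:Z)%Z by rewrite gez0_abs // modz_ge0.
  have Ec : c0%:Z = (c %% nn%:Z)%Z by rewrite gez0_abs // modz_ge0.
  have la : (a0 < m)%N by rewrite -ltz_nat Ea; have := ltz_mod a mz.
  have lb : (b0 < nn)%N by rewrite -ltz_nat Eb; have := ltz_mod b nz.
  have lc : (c0 < nn)%N by rewrite -ltz_nat Ec; have := ltz_mod c nz.
  have li : (a0 + m * (b0 + nn * c0) < idx l)%N.
    have h1 : (b0 + nn * c0 < nn * nn)%N.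
      have : (nn * c0.+1 <= nn * nn)%N by rewrite leq_mul2l lc orbT.
      rewrite mulnS; move: lb; lia.
    have h2 : (m * (b0 + nn * c0).+1 <= m * (nn * nn))%N by rewrite leq_mul2l h1 orbT.
    have -> : idx l = (m * (nn * nn))%N by rewrite /idx -/m -/nn mulnA.
    move: h2; rewrite mulnS; move: la; lia.
  exists (Ordinal li) => /=.
  have D1 : ((a0 + m * (b0 + nn * c0)) %% m = a0)%N.
    by rewrite addnC mulnC modnMDl modn_small.
  have D2 : ((a0 + m * (b0 + nn * c0)) %/ m = b0 + nn * c0)%N.
    by rewrite addnC mulnC divnMDl // divn_small // addn0.
  have D3 : ((b0 + nn * c0) %% nn = b0)%N.
    by rewrite addnC mulnC modnMDl modn_small.
  have D4 : ((b0 + nn * c0) %/ nn = c0)%N.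
    by rewrite addnC mulnC divnMDl // divn_small // addn0.
  rewrite D1 D2 D3 D4; apply/coset_cond; rewrite MqE NqE' Ea Eb Ec.
  split; apply/dvdzP.
  + exists (a %/ m%:Z)%Z; rewrite {1}(divz_eq a m%:Z); ring.
  + exists (b %/ nn%:Z)%Z; rewrite {1}(divz_eq b nn%:Z); ring.
  + exists (c %/ nn%:Z)%Z; rewrite {1}(divz_eq c nn%:Z); ring.
Qed.
End Index.
Section Uniq.
Variable H : set Heis.
Hypothesis sH : is_subgroup H.

Lemma same_sym g h : same_lcoset H g h -> same_lcoset H h g.
Proof. case: sH => _ [_ hV] /hV; by rewrite /same_lcoset hinvM hinvK. Qed.
Lemma same_trans g h k : same_lcoset H g h -> same_lcoset H h k -> same_lcoset H g k.
Proof. case: sH => _ [hM _] a b; have := hM _ _ a b.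
by rewrite /same_lcoset -hmulA (hmulA (hinv g)) hmulxV hmulx1. Qed.

Lemma index_le n m : has_index H n -> has_index H m -> (n <= m)%N.
Proof.
move=> [r [ri _]] [r' [_ rs]].
pose f i := projT1 (cid (rs (r i))).
have fP i : same_lcoset H (r' (f i)) (r i) := projT2 (cid (rs (r i))).
have finj : injective f.
  move=> i j e; apply: ri; apply: same_trans (same_sym (fP i)) _.
  by rewrite e; exact: fP.
by have := leq_card f finj; rewrite !card_ord.
Qed.

Lemma index_uniq n m : has_index H n -> has_index H m -> n = m.
Proof. by move=> a b; apply/eqP; rewrite eqn_leq !(index_le a b, index_le b a). Qed.
End Uniq.

Section Logn.
Variable q : nat -> nat.
Hypothesis q_prime : forall i, prime (q i).
Hypothesis q_inj : injective q.

Lemma logn_Mn p l : logn p (Mn q l) = (\sum_(i < l) (p == q i))%N.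
Proof.
elim: l => [|l IH]; first by rewrite /Mn !big_ord0 logn1.
rewrite MnS big_ord_recr /= lognM ?Mn_gt0 ?prime_gt0 // IH logn_prime //.
Qed.

Lemma logn_idx p l : logn p (idx q l) = (5 * \sum_(i < l) (p == q i))%N.
Proof.
have h := Mn_gt0 q_prime l.
rewrite /idx !lognM ?muln_gt0 ?h // logn_Mn; lia.
Qed.

Lemma sum_qi i l : (\sum_(j < l) (q i == q j))%N = (i < l)%N.
Proof.
elim: l => [|l IH]; first by rewrite big_ord0.
rewrite big_ord_recr /= IH (inj_eq q_inj) ltnS.
by case: (eqVneq i l) => [->|ne]; [rewrite ltnn leqnn | rewrite addn0 ltn_neqAle ne].
Qed.
End Logn.
Section Space.
Variable q : nat -> nat.
Hypothesis q_prime : forall i, prime (q i).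
Hypothesis q_inj : injective q.
Local Notation G := (Gamma q).
Local Notation X := (Xinf (Gamma q)).

Lemma X_coset x : X x -> forall l, exists k, x l = lcoset (G l) k.
Proof. by move=> Xx l; case: (Xx l). Qed.

Lemma X_chain x l l' : X x -> (l <= l')%N -> x l' `<=` x l.
Proof.
move=> Xx /subnKC <-; elim: (l' - l)%N => [|k IH]; first by rewrite addn0.
by rewrite addnS; apply: subset_trans IH; case: (Xx (l + k)%N).
Qed.

Lemma X_rep x l k : X x -> x l k -> x l = lcoset (G l) k.
Proof.
move=> Xx xk; have [k' E] := X_coset Xx l; rewrite E in xk *.
exact (lcoset_in (Gamma_subgroup q l) xk).
Qed.

Definition pt (k : Heis) : Pt := fun l => lcoset (G l) k.

Lemma pt_in k : X (pt k).
Proof. move=> l; split; first by exists k. exact (lcoset_sub (@Gamma_chain q l)). Qed.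

Lemma act_pt g k : act g (pt k) = pt (hmul g k).
Proof. by apply: funext => l; rewrite /act /pt act_lcoset. Qed.

Lemma act1 x : act hone x = x.
Proof.
apply: funext => l; rewrite /act; apply/seteqP; split => y.
  by case=> h xh <-; rewrite hmul1.
by move=> xy; exists y => //; rewrite hmul1.
Qed.

Lemma pt_eq_inv g k : pt g = pt k -> g = k.
Proof.
move=> E.
have h : hmul (hinv g) k = hone.
  apply: (Gamma_cap q_prime) => l.
  apply: (lcoset_eq_inv (Gamma_subgroup q l)).
  by have := congr1 (fun f => f l) E.
have : hmul g (hmul (hinv g) k) = g by rewrite h hmulx1.
by rewrite -hmulA hmulxV hmul1 => ->.
Qed.

Lemma topfree : topologically_free X.
Proof.
move=> g [x [Xx ne]] [U [[UX Uo] [[x' Ux'] fixU]]].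
have Xx' := UX _ Ux'.
have [n hn] := Uo x' Ux'.
have [k hk] := X_coset Xx' n.
have kin : x' n k by rewrite hk; exact (lcoset_self (Gamma_subgroup q n) k).
have ag : agree n x' (pt k).
  move=> l ln; apply: X_rep => //; apply: (X_chain Xx' (ltnW ln)); exact: kin.
have Uy := hn _ (pt_in k) ag.
have := fixU _ Uy; rewrite act_pt => /pt_eq_inv E.
have : hmul (hmul g k) (hinv k) = hone by rewrite E hmulxV.
rewrite hmulA hmulxV hmulx1 => g1.
by apply: ne; rewrite g1 act1.
Qed.
End Space.
Section Real.
Local Open Scope ring_scope.


Lemma sup_le_gen (E : set Rdefinitions.R) b : 0 <= b -> (forall y, E y -> y <= b) -> sup E <= b.
Proof.
move=> b0 hb; case: (pselect (E !=set0)) => [ne|e0].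
  by apply: ge_sup => // y; exact: hb.
have -> : E = set0 by apply/seteqP; split => y // Ey; apply: e0; exists y.
by rewrite sup0.
Qed.

Lemma pow2_pos n : 0 < (2 : Rdefinitions.R) ^+ n.
Proof. by rewrite exprn_gt0. Qed.

Lemma inv_pow2_le m n : (m <= n)%N -> ((2 : Rdefinitions.R) ^+ n)^-1 <= ((2 : Rdefinitions.R) ^+ m)^-1.
Proof.
move=> mn; rewrite lef_pV2 ?posrE ?pow2_pos //.
by rewrite -!natrX ler_nat leq_exp2l.
Qed.

Lemma dist_le (x y : Pt) L : (forall m, (m <= L)%N -> x m = y m) ->
  dist x y <= ((2 : Rdefinitions.R) ^+ L.+1)^-1.
Proof.
move=> h; apply: sup_le_gen; first by rewrite invr_ge0 ltW ?pow2_pos.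
move=> _ [n ne <-]; apply: inv_pow2_le; rewrite ltnNge; apply/negP => nL.
by apply: ne; apply: h.
Qed.

Lemma small_pow (e : Rdefinitions.R) : 0 < e -> exists L, ((2 : Rdefinitions.R) ^+ L.+1)^-1 < e.
Proof.
move=> e0; have ei : 0 <= e^-1 by rewrite invr_ge0 ltW.
exists (Num.Def.archi_bound e^-1).
rewrite invf_plt ?posrE ?pow2_pos //.
apply: lt_le_trans (archi_boundP ei) _.
rewrite -natrX ler_nat; set N := Num.Def.archi_bound _.
apply: ltnW; apply: ltn_trans (ltnSn N) _; exact: ltn_expl.
Qed.
End Real.

Section Closure.
Variable q : nat -> nat.
Hypothesis q_prime : forall i, prime (q i).
Local Notation G := (Gamma q).
Local Notation X := (Xinf (Gamma q)).
Local Open Scope ring_scope.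

Definition Hs (gs : nat -> Heis) (x : Pt) : Pt := fun l => [set hmul (gs l) h | h in x l].
Definition Cmp (gs : nat -> Heis) := forall m L k, (m <= L)%N ->
  G m (hmul (hinv (hmul (gs m) k)) (hmul (gs L) k)).

Lemma Hs_coset gs x l k : x l = lcoset (G l) k -> Hs gs x l = lcoset (G l) (hmul (gs l) k).
Proof. by move=> E; rewrite /Hs E act_lcoset. Qed.

Lemma Hs_in gs x : Cmp gs -> X x -> X (Hs gs x).
Proof.
move=> C Xx l; split.
  by have [k E] := X_coset Xx l; exists (hmul (gs l) k); exact: Hs_coset.
have [k' E'] := X_coset Xx l.+1.
have kin : x l k'.
  apply: (X_chain Xx (leqnSn l)); rewrite E'; exact (lcoset_self (Gamma_subgroup q l.+1) k').
have E := X_rep Xx kin.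
rewrite (Hs_coset gs E') (Hs_coset gs E).
rewrite (lcoset_eq (Gamma_subgroup q l) (C l l.+1 k' (leqnSn l))).
exact (lcoset_sub (@Gamma_chain q l)).
Qed.

Lemma Hs_level gs x m L : Cmp gs -> X x -> (m <= L)%N ->
  Hs gs x m = Hs (fun _ => gs L) x m.
Proof.
move=> C Xx mL; have [k E] := X_coset Xx m.
rewrite (Hs_coset gs E) (Hs_coset (fun=> gs L) E) /=.
exact: (lcoset_eq (Gamma_subgroup q m) (C m L k mL)).
Qed.

Lemma Hs_inv gs x : Hs (fun l => hinv (gs l)) (Hs gs x) = x.
Proof.
apply: funext => l; rewrite /Hs; apply/seteqP; split => y.
  by case=> _ [h xh <-] <-; rewrite -hmulA hmulV hmul1.
by move=> xy; exists (hmul (gs l) y); [exists y|rewrite -hmulA hmulV hmul1].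
Qed.

Lemma Hs_inv' gs x : Hs gs (Hs (fun l => hinv (gs l)) x) = x.
Proof.
have := Hs_inv (fun l => hinv (gs l)) x.
by have -> : (fun l => hinv (hinv (gs l))) = gs by apply: funext => l; rewrite hinvK.
Qed.

Lemma Hs_cont gs : Cmp gs -> continuous_on X (Hs gs).
Proof.
move=> C U [UX Uo]; split; first by move=> x [].
move=> x [Xx Ux]; have [n hn] := Uo _ Ux; exists n => y Xy ag; split => //.
apply: hn; first exact: Hs_in.
by move=> l ln; rewrite /Hs (ag l ln).
Qed.

Lemma Hs_closure gs : Cmp gs -> Cmp (fun l => hinv (gs l)) ->
  closure_group X (Hs gs).
Proof.
move=> C C'; split.
  split; first by move=> x; exact: Hs_in.
  exists (Hs (fun l => hinv (gs l))); split; first by move=> x; exact: Hs_in.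
  split; first by move=> x _; exact: Hs_inv.
  split; first by move=> x _; exact: Hs_inv'.
  by split; apply: Hs_cont.
move=> e e0; have [L hL] := small_pow e0; exists (gs L).
apply: le_lt_trans hL; apply: sup_le_gen; first by rewrite invr_ge0 ltW ?pow2_pos.
move=> _ [x Xx <-]; apply: dist_le => m mL.
exact: Hs_level.
Qed.

Lemma Cmp_const g : Cmp (fun _ => g).
Proof. move=> m L k _; rewrite hmulV; exact: (Gamma_subgroup q m).1. Qed.

Lemma act_closure g : closure_group X (act g).
Proof. exact: (Hs_closure (Cmp_const g) (Cmp_const (hinv g))). Qed.
End Closure.
Section Conj.
Variable q : nat -> nat.
Local Notation G := (Gamma q).
Local Open Scope ring_scope.

Lemma Cmp_a (a : nat -> int) :
  (forall m L, (m <= L)%N -> (Nq q m %| a L - a m)%Z) -> Cmp q (fun l => (a l, 0, 0)).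
Proof.
move=> h m L [[x y] z] mL.
have E : hmul (hinv (hmul (a m, 0, 0) (x, y, z))) (hmul (a L, 0, 0) (x, y, z)) =
         (a L - a m, 0, (a L - a m) * y).
  by rewrite /hmul /hinv /=; congr (_,_,_); ring.
rewrite E; apply/GammaP; split; rewrite ?dvdz0 //.
  exact: dvdz_trans (MqNq q m) (h _ _ mL).
by apply: dvdz_mulr; exact: h.
Qed.

Lemma fix_a l (a : int) x y z : (Mq q l %| a)%Z -> (Nq q l %| a * y)%Z ->
  lcoset (G l) (hmul (a, 0, 0) (x, y, z)) = lcoset (G l) (x, y, z).
Proof.
move=> h1 h2; apply: (lcoset_eq (Gamma_subgroup q l)).
have E : hmul (hinv (hmul (a, 0, 0) (x, y, z))) (x, y, z) = (- a, 0, - (a * y)).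
  by rewrite /hmul /hinv /=; congr (_,_,_); ring.
by rewrite E; apply/GammaP; split; rewrite ?rpredN ?dvdz0.
Qed.

Lemma move_a l (a : int) x y z :
  lcoset (G l) (hmul (a, 0, 0) (x, y, z)) = lcoset (G l) (x, y, z) ->
  (Nq q l %| a * y)%Z.
Proof.
move=> /(lcoset_eq_inv (Gamma_subgroup q l)).
have E : hmul (hinv (hmul (a, 0, 0) (x, y, z))) (x, y, z) = (- a, 0, - (a * y)).
  by rewrite /hmul /hinv /=; congr (_,_,_); ring.
by rewrite E => /GammaP[_ _]; rewrite rpredN.
Qed.

Lemma hinv1 : hinv hone = hone.
Proof. by rewrite /hinv /hone; congr (_,_,_); ring. Qed.
End Conj.

Section Wild.
Variable q : nat -> nat.
Hypothesis q_prime : forall i, prime (q i).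
Hypothesis q_inj : injective q.
Variable n : nat.
Local Notation G := (Gamma q).
Local Notation X := (Xinf (Gamma q)).

Definition tt := totient (q n).
Definition Rr l := (\prod_(i < l) (if (i : nat) != n then q i else 1))%N.
Definition ee l := if (n < l)%N then q n else 1%N.
Definition aa l : int := (q n * (Rr l ^ tt) ^ 2)%N%:Z.

Lemma tt_gt0 : (0 < tt)%N.
Proof. by rewrite totient_gt0 prime_gt0. Qed.

Lemma RrS l : Rr l.+1 = (Rr l * (if l != n then q l else 1))%N.
Proof. by rewrite /Rr big_ord_recr. Qed.

Lemma Rr_gt0 l : (0 < Rr l)%N.
Proof.
elim: l => [|l IH]; first by rewrite /Rr big_ord0.
by rewrite RrS muln_gt0 IH; case: ifP => // _; exact: prime_gt0.
Qed.

Lemma Mn_Rr l : Mn q l = (Rr l * ee l)%N.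
Proof.
elim: l => [|l IH]; first by rewrite /Mn /Rr /ee !big_ord0.
rewrite MnS IH RrS /ee; case: (eqVneq l n) => [->|ne].
  by rewrite ltnn ltnSn /= muln1.
have -> : (n < l.+1)%N = (n < l)%N by rewrite ltnS leq_eqVlt eq_sym (negbTE ne).
by rewrite /= mulnAC.
Qed.

Lemma Rr_coprime l : coprime (Rr l) (q n).
Proof.
elim: l => [|l IH]; first by rewrite /Rr big_ord0 coprime1n.
rewrite RrS coprimeMl IH /=; case: (eqVneq l n) => [_|ne] /=; first exact: coprime1n.
rewrite prime_coprime // dvdn_prime2 // (inj_eq q_inj); exact: ne.
Qed.

Lemma Rr_dvd m L : (m <= L)%N -> (Rr m %| Rr L)%N.
Proof.
move=> /subnKC <-; elim: (L - m)%N => [|k IH]; first by rewrite addn0.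
by rewrite addnS RrS; exact: dvdn_mulr.
Qed.

Lemma ee_dvd l : (ee l %| q n)%N.
Proof. by rewrite /ee; case: ifP. Qed.

Local Open Scope ring_scope.
Lemma NqN l : Nq q l = ((Mn q l) ^ 2)%N%:Z.
Proof. by rewrite NqE -PoszM mulnn. Qed.


Lemma A1 l : (Mq q l %| aa l)%Z.
Proof.
have -> : Mq q l = (Mn q l)%:Z by [].
rewrite dvdzE /= Mn_Rr mulnC; apply: dvdn_mul; first exact: ee_dvd.
by rewrite -expnM -{1}(expn1 (Rr l)) dvdn_exp2l // muln_gt0 tt_gt0.
Qed.

Lemma A2 l (y : int) : ((q n)%:Z %| y)%Z -> (Nq q l %| aa l * y)%Z.
Proof.
move=> /dvdzP [y' ->]; rewrite NqN /aa.
have E : (q n * (Rr l ^ tt) ^ 2)%N%:Z * (y' * (q n)%:Z) =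
         y' * ((Rr l ^ tt) ^ 2 * q n ^ 2)%N%:Z.
  by rewrite !PoszM; ring.
rewrite E; apply: dvdz_mull; rewrite dvdzE /= Mn_Rr expnMn.
apply: dvdn_mul; apply: dvdn_exp2r; last exact: ee_dvd.
by rewrite -{1}(expn1 (Rr l)) dvdn_exp2l // tt_gt0.
Qed.

Lemma A0 m L : (m <= L)%N -> (Nq q m %| aa L - aa m)%Z.
Proof.
move=> mL; set S := (Rr L %/ Rr m)%N.
have RL : Rr L = (S * Rr m)%N by rewrite divnK // Rr_dvd.
have S0 : (0 < S)%N by have := Rr_gt0 L; rewrite RL muln_gt0 => /andP[].
have cS : coprime S (q n).
  by apply: coprime_dvdl (Rr_coprime L); rewrite RL dvdn_mulr.
have eu := cyclic.Euler_exp_totient cS.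
have : (q n %| S ^ tt - 1)%N.
  by rewrite -eqn_mod_dvd ?expn_gt0 ?S0 //; apply/eqP; rewrite -/tt in eu.
move=> /dvdnP [w hw].
have St : (S ^ tt = w * q n + 1)%N by rewrite -hw subnK // expn_gt0 S0.
set Y := (Rr m ^ tt)%N.
have EL : (q n * (Rr L ^ tt) ^ 2 = q n * Y ^ 2 + q n ^ 2 * Y ^ 2 * (w ^ 2 * q n + 2 * w))%N.
  by rewrite RL expnMn St /Y; ring.
rewrite /aa EL -/Y PoszD addrAC subrr add0r NqN dvdzE /= Mn_Rr.
apply: dvdn_mulr; rewrite expnMn mulnC; apply: dvdn_mul.
  exact: dvdn_exp2r (ee_dvd m).
by rewrite /Y -expnM dvdn_exp2l // leq_pmull // tt_gt0.
Qed.

Lemma A3 : ~ (Nq q n.+1 %| aa n.+1 * Nq q n)%Z.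
Proof.
rewrite !NqN /aa -PoszM dvdzE /= MnS RrS eqxx muln1.
have -> : Mn q n = Rr n by rewrite Mn_Rr /ee ltnn muln1.
set r := Rr n; set p := q n.
have p0 : (0 < p)%N by exact: prime_gt0 (q_prime n).
have r0 : (0 < r)%N by exact: Rr_gt0.
have -> : ((r * p) ^ 2 = (p * r ^ 2) * p)%N by ring.
have -> : (p * (r ^ tt) ^ 2 * r ^ 2 = (p * r ^ 2) * (r ^ tt) ^ 2)%N by ring.
rewrite dvdn_pmul2l ?muln_gt0 ?p0 ?expn_gt0 ?r0 //.
move=> h; move: h; rewrite /p (Euclid_dvdX _ _ (q_prime n)) => /andP[].
rewrite (Euclid_dvdX _ _ (q_prime n)) => /andP[pr _] _.
by have := Rr_coprime n; rewrite coprime_sym prime_coprime // pr.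

Qed.

Definition gs l : Heis := (aa l, 0, 0).

Lemma gs_closure : closure_group X (Hs gs).
Proof.
apply: Hs_closure; first exact (Cmp_a (fun m L h => @A0 m L h)).
have -> : (fun l => hinv (gs l)) = (fun l => (- aa l, 0, 0)).
  by apply: funext => l; rewrite /gs /hinv; congr (_,_,_); ring.
apply: (Cmp_a (a := fun l => - aa l)) => m L mL; have E : - aa L - - aa m = - (aa L - aa m) by ring.
by rewrite E rpredN; exact (A0 mL).
Qed.
End Wild.
Section Final.
Variable q : nat -> nat.
Hypothesis q_prime : forall i, prime (q i).
Hypothesis q_inj : injective q.
Local Notation G := (Gamma q).
Local Notation X := (Xinf (Gamma q)).
Local Open Scope ring_scope.

Lemma qn_dvd_Nq n : ((q n)%:Z %| Nq q n.+1)%Z.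
Proof. by rewrite NqN dvdzE /= MnS expnMn; apply: dvdn_mull; rewrite dvdn_exp. Qed.

Lemma wild_thm : wild X.
Proof.
move=> [e [e0 LQA]].
have [n hn] := small_pow e0.
pose x0 := pt q hone.
pose U := [set y | X y /\ agree n.+1 x0 y].
pose V := [set y | X y /\ agree n.+2 x0 y].
have x0X : X x0 by exact: pt_in.
have Uo : is_open X U.
  split; first by move=> y [].
  move=> x [Xx ag]; exists n.+1 => y Xy ag'; split => // l ll.
  by rewrite (ag l ll); exact: ag'.
have Vo : is_open X V.
  split; first by move=> y [].
  move=> x [Xx ag]; exists n.+2 => y Xy ag'; split => // l ll.
  by rewrite (ag l ll); exact: ag'.
have x0U : U x0 by split.
have x0V : V x0 by split.
have diamU : diam U < e.
  apply: le_lt_trans hn; apply: sup_le_gen; first by rewrite invr_ge0 ltW ?pow2_pos.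
  move=> _ [y [Xy agy] [z [Xz agz] <-]].
  apply: dist_le => m mn; rewrite -(agy m mn) (agz m mn) //.
have VU : V `<=` U.
  move=> y [Xy ag]; split => // l ll; apply: ag; exact: ltn_trans ll (ltnSn _).
have agV : forall x, V x -> Hs (gs q n) x = act hone x.
  move=> x [Xx ag]; rewrite act1; apply: funext => l.
  have [k [E kd]] : exists k, x l = lcoset (G l) k /\ ((q n)%:Z %| k.1.2)%Z.
    case: (ltnP l n.+2) => ll.
      exists hone; split; last by rewrite dvdz0.
      by rewrite -(ag l ll).
    have [k E] := X_coset Xx l; exists k; split => //.
    have kin : x l k by rewrite E; exact (lcoset_self (Gamma_subgroup q l) k).
    have : x n.+1 k by exact (X_chain Xx (ltnW ll) kin).
    rewrite -(ag n.+1 (ltnSn _)) /x0 /pt lcoset1.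
    case: k {E kin} => [[a b] c] /GammaP[_ hb _] /=.
    exact: dvdz_trans (qn_dvd_Nq n) hb.
  rewrite (Hs_coset (gs q n) E) E; case: k {E} kd => [[a b] c] /= kd.
  apply: fix_a; first exact: A1.
  exact: A2.
pose k1 : Heis := (0, Nq q n, 0).
pose x1 := pt q k1.
have x1U : U x1.
  split; first exact: pt_in.
  move=> l ll; rewrite /x0 /x1 /pt; apply: (lcoset_eq (Gamma_subgroup q l)).
  rewrite hinv1 hmul1; apply: (Gamma_mono (l:=l) (l':=n)) => //.
  by apply/GammaP; split; rewrite ?dvdz0 ?dvdzz.
have := LQA U V Uo (ex_intro _ x0 x0U) diamU Vo (ex_intro _ x0 x0V) VU
  (Hs (gs q n)) (act hone) (gs_closure q_prime q_inj n) (act_closure q hone) agV x1 x1U.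
rewrite act1 => /(congr1 (fun f => f n.+1)).
rewrite (Hs_coset (gs q n) (erefl (x1 n.+1))) /x1 /pt /k1 => /move_a.
exact (A3 q_prime q_inj (n:=n)).
Qed.

Lemma prime_spec p : in_prime_spectrum G p <-> exists i, p = q i.
Proof.
split.
- move=> [l [m [hi lg]]].
  have em := index_uniq (Gamma_subgroup q l) hi (Gamma_index q_prime l).
  rewrite em logn_idx // in lg.
  case: (pselect (exists i : 'I_l, p == q i)) => [[i /eqP ->]|nex].
    by exists i.
  exfalso; move: lg; rewrite big1 //= => i _.
  by case: eqP => // e; exfalso; apply: nex; exists i; apply/eqP.
- move=> [i ->]; exists i.+1, (idx q i.+1); split; first exact: Gamma_index.
  by rewrite logn_idx // sum_qi // ltnSn.
Qed.

Lemma fin_mult i : finite_multiplicity G (q i).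
Proof.
exists 5%N => l m hi.
have em := index_uniq (Gamma_subgroup q l) hi (Gamma_index q_prime l).
by rewrite em logn_idx // sum_qi //; case: ltnP.
Qed.
End Final.

Unset Implicit Arguments.
Theorem mainTheorem9 (q : nat -> nat) (q_prime : forall i, prime (q i))
    (q_inj : injective q) :
  (forall l, is_subgroup (Gamma q l) /\ finite_index (Gamma q l) /\
             Gamma q l.+1 `<=` Gamma q l) /\
  topologically_free (Xinf (Gamma q)) /\
  wild (Xinf (Gamma q)) /\
  (forall p, in_prime_spectrum (Gamma q) p <-> exists i, p = q i) /\
  (forall i, finite_multiplicity (Gamma q) (q i)).
Proof.
split.
  move=> l; split; first exact: Gamma_subgroup.
  split; last exact: Gamma_chain.
  by exists (idx q l); exact: Gamma_index.
split; first exact: topfree.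
split; first exact: wild_thm.
split; first exact: prime_spec.
exact: fin_mult.
Qed.
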